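(* Let $\mathfrak{n}$ be the real $7$-dimensional Lie algebra with basis $e_1,\dots,e_7$ whose nonzero brackets (up to antisymmetry) are $[e_1,e_2]=e_3$, $[e_1,e_3]=e_5$, $[e_1,e_4]=e_6$, $[e_1,e_5]=e_7$, $[e_1,e_6]=e_7$, $[e_2,e_3]=e_7$. Then $\mathfrak{n}$ is an Einstein nilradical.
   Context: A real nilpotent Lie algebra $\mathfrak{n}$ is called an Einstein nilradical if it admits an inner product such that the left-invariant Riemannian metric it defines on the simply connected nilpotent Lie group with Lie algebra $\mathfrak{n}$ is a nilsoliton, i.e. its Ricci operator satisfies $\mathrm{Ric}=c\,\mathrm{Id}+D$ for some $c\in\mathbb{R}$ and some derivation $D$ of $\mathfrak{n}$. Brackets of basis elements not listed are zero. *)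

(* Defs.v *)
From HB Require Import structures.
From mathcomp Require Import all_boot all_order all_algebra.
From mathcomp Require Import reals.
Set Implicit Arguments. Unset Strict Implicit. Unset Printing Implicit Defensive.
Import Order.TTheory GRing.Theory Num.Theory.
Local Open Scope ring_scope.

Section LieDefs.
Variables (R : realType) (n : nat).

Definition e (i : 'I_n) : 'rV[R]_n := delta_mx 0 i.

Definition ipG (G : 'M[R]_n) (x y : 'rV[R]_n) : R := (x *m G *m y^T) 0 0.

Definition is_inner_product (G : 'M[R]_n) : Prop :=
  G^T = G /\ forall x : 'rV[R]_n, x != 0 -> 0 < ipG G x x.

Definition bracket_of (c : 'I_n -> 'I_n -> 'rV[R]_n) (x y : 'rV[R]_n) : 'rV[R]_n :=
  \sum_(i < n) \sum_(j < n) (x 0 i * y 0 j) *: c i j.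

Definition is_derivation (br : 'rV[R]_n -> 'rV[R]_n -> 'rV[R]_n) (D : 'M[R]_n) : Prop :=
  forall x y, br x y *m D = br (x *m D) y + br x (y *m D).

(* Ricci form of the left-invariant metric on a nilpotent Lie algebra:
   ric(x,y) = -1/2 sum_{i,j} <[x,f_i],f_j><[y,f_i],f_j>
              + 1/4 sum_{i,j} <[f_i,f_j],x><[f_i,f_j],y>
   for an orthonormal basis (f_i); written basis-free using G^{-1}
   (sum_i B(f_i,f_i) = sum_{k,l} (G^{-1})_{kl} B(e_k,e_l)). *)
Definition ric_form (br : 'rV[R]_n -> 'rV[R]_n -> 'rV[R]_n) (G : 'M[R]_n)
    (x y : 'rV[R]_n) : R :=
  let Gi := invmx G in
  - (1 / 2) * (\sum_(k < n) \sum_(l < n) Gi k l * ipG G (br x (e k)) (br y (e l)))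
  + (1 / 4) * (\sum_(k < n) \sum_(l < n) \sum_(p < n) \sum_(q < n)
        Gi k p * Gi l q * ipG G (br (e k) (e l)) x * ipG G (br (e p) (e q)) y).

(* Ric = c Id + D with D a derivation; Ric is the G-symmetric operator with
   <Ric x, y> = ric(x,y). *)
Definition is_nilsoliton (br : 'rV[R]_n -> 'rV[R]_n -> 'rV[R]_n) (G : 'M[R]_n) : Prop :=
  exists (c : R) (D : 'M[R]_n), is_derivation br D /\
    forall x y, ric_form br G x y = ipG G (c *: x + x *m D) y.

Definition Einstein_nilradical (br : 'rV[R]_n -> 'rV[R]_n -> 'rV[R]_n) : Prop :=
  exists G : 'M[R]_n, is_inner_product G /\ is_nilsoliton br G.

End LieDefs.

(* The 7-dim algebra; index k (0-based) stands for e_{k+1}.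
   [e1,e2]=e3, [e1,e3]=e5, [e1,e4]=e6, [e1,e5]=e7, [e1,e6]=e7, [e2,e3]=e7 *)
Definition n7_table (i j : nat) : option nat :=
  match i, j with
  | 0, 1 => Some 2%N | 0, 2 => Some 4%N | 0, 3 => Some 5%N
  | 0, 4 => Some 6%N | 0, 5 => Some 6%N | 1, 2 => Some 6%N
  | _, _ => None
  end.

Definition n7_const (R : realType) (i j : 'I_7) : 'rV[R]_7 :=
  match n7_table i j, n7_table j i with
  | Some k, _ => @e R 7 (inord k)
  | None, Some k => - @e R 7 (inord k)
  | None, None => 0
  end.

Definition n7_bracket (R : realType) := bracket_of (@n7_const R).

(* Main.v *)
Require Import Defs.
From HB Require Import structures.
From mathcomp Require Import all_boot all_order all_algebra.
From mathcomp Require Import reals.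
From mathcomp Require Import ring lra.
Set Implicit Arguments. Unset Strict Implicit. Unset Printing Implicit Defensive.
Import Order.TTheory GRing.Theory Num.Theory.
Local Open Scope ring_scope.

Section Work.
Variable R : realType.

Definition o0 : 'I_7 := @Ordinal 7 0 isT.
Definition o1 : 'I_7 := @Ordinal 7 1 isT.
Definition o2 : 'I_7 := @Ordinal 7 2 isT.
Definition o3 : 'I_7 := @Ordinal 7 3 isT.
Definition o4 : 'I_7 := @Ordinal 7 4 isT.
Definition o5 : 'I_7 := @Ordinal 7 5 isT.
Definition o6 : 'I_7 := @Ordinal 7 6 isT.

Lemma sum7 (F : 'I_7 -> R) :
  \sum_(k < 7) F k = F o0 + F o1 + F o2 + F o3 + F o4 + F o5 + F o6.
Proof.
rewrite !big_ord_recl big_ord0 addr0 !addrA /=.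
by do 7? (congr (_ + _) || (congr F; apply: val_inj)).
Qed.

Lemma ord7_cases (P : 'I_7 -> Prop) :
  P o0 -> P o1 -> P o2 -> P o3 -> P o4 -> P o5 -> P o6 -> forall m, P m.
Proof.
move=> H0 H1 H2 H3 H4 H5 H6 [m Hm].
case: m Hm => [|m] Hm; first by rewrite (bool_irrelevance Hm isT).
case: m Hm => [|m] Hm; first by rewrite (bool_irrelevance Hm isT).
case: m Hm => [|m] Hm; first by rewrite (bool_irrelevance Hm isT).
case: m Hm => [|m] Hm; first by rewrite (bool_irrelevance Hm isT).
case: m Hm => [|m] Hm; first by rewrite (bool_irrelevance Hm isT).
case: m Hm => [|m] Hm; first by rewrite (bool_irrelevance Hm isT).
case: m Hm => [|m] Hm; first by rewrite (bool_irrelevance Hm isT).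
by [].
Qed.


Definition Gf (i j : nat) : R :=
  match i, j with
  | 0, 0 => 1 | 1, 1 => 5 | 2, 2 => 45 | 2, 3 => 15 | 3, 2 => 15 | 3, 3 => 45
  | 4, 4 => 360 | 4, 5 => 240 | 5, 4 => 240 | 5, 5 => 360 | 6, 6 => (18 * 100)
  | _, _ => 0 end.
Definition G0 : 'M[R]_7 := \matrix_(i, j) Gf i j.

Definition ipx (u v : 'rV[R]_7) : R :=
  u 0 o0 * v 0 o0 + 5 * (u 0 o1 * v 0 o1)
  + 45 * (u 0 o2 * v 0 o2) + 15 * (u 0 o2 * v 0 o3) + 15 * (u 0 o3 * v 0 o2)
  + 45 * (u 0 o3 * v 0 o3)
  + 360 * (u 0 o4 * v 0 o4) + 240 * (u 0 o4 * v 0 o5) + 240 * (u 0 o5 * v 0 o4)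
  + 360 * (u 0 o5 * v 0 o5) + (18 * 100) * (u 0 o6 * v 0 o6).

Lemma ipG_expl u v : ipG G0 u v = ipx u v.
Proof.
rewrite /ipG !mxE sum7 !mxE !sum7 !mxE /ipx /Gf /=.
ring.
Qed.

Lemma tab_lt i j k : n7_table i j = Some k -> (k < 7)%N.
Proof.
case: i => [|[|i]] /=; do 7 (try case: j => [|j]); try (by []);
  by move=> -[<-].
Qed.

Definition cf (i j m : nat) : R :=
  match n7_table i j, n7_table j i with
  | Some k, _ => if eqn k m then 1 else 0
  | None, Some k => if eqn k m then -1 else 0
  | _, _ => 0 end.

Lemma inord_eq (k : nat) (m : 'I_7) : (k < 7)%N ->
  (m == inord k) = eqn k m.
Proof.
move=> hk; apply/eqP/eqnP.
  by move=> ->; rewrite inordK.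
by move=> E; apply: val_inj; rewrite /= inordK // E.
Qed.

Lemma cfE (i j m : 'I_7) : n7_const R i j 0 m = cf i j m.
Proof.
rewrite /n7_const /cf.
case E1: (n7_table i j) => [k|].
  by rewrite /e mxE eqxx /= inord_eq //; [case: (eqn k m)|apply: tab_lt E1].
case E2: (n7_table j i) => [k|]; last by rewrite mxE.
by rewrite mxE /e mxE eqxx /= inord_eq //; [case: (eqn k m) => /=; rewrite ?oppr0 | apply: tab_lt E2].
Qed.


Definition brf (m : nat) (x y : 'rV[R]_7) : R :=
  match m with
  | 2 => x 0 o0 * y 0 o1 - x 0 o1 * y 0 o0
  | 4 => x 0 o0 * y 0 o2 - x 0 o2 * y 0 o0
  | 5 => x 0 o0 * y 0 o3 - x 0 o3 * y 0 o0
  | 6 => x 0 o0 * y 0 o4 - x 0 o4 * y 0 o0 + x 0 o0 * y 0 o5 - x 0 o5 * y 0 o0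
         + x 0 o1 * y 0 o2 - x 0 o2 * y 0 o1
  | _ => 0 end.

Lemma br_expl x y : @n7_bracket R x y = \row_(m < 7) brf m x y.
Proof.
apply/rowP; apply: ord7_cases;
rewrite mxE /n7_bracket /bracket_of summxE sum7 !summxE !sum7 !mxE
  !inord_eq // /brf /=; ring.
Qed.


Definition dg (i : nat) : R :=
  match i with 0 => 11 / 2 | 1 => 11 | 2 => 33 / 2 | 3 => 33 / 2 | 4 => 22 | 5 => 22
  | _ => 55 / 2 end.
Definition D0 : 'M[R]_7 := \matrix_(i, j) if eqn i j then dg i else 0.

Lemma D0_der : is_derivation (@n7_bracket R) D0.
Proof.
move=> x y; rewrite !br_expl; apply/rowP; apply: ord7_cases;
rewrite !mxE ?sum7 ?mxE /brf /= ?mxE ?sum7 ?mxE /dg /=; by field.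
Qed.

Definition Gif (i j : nat) : R :=
  match i, j with
  | 0, 0 => 1 | 1, 1 => 1 / 5 | 2, 2 => 1 / 40 | 2, 3 => - (1 / 120) | 3, 2 => - (1 / 120)
  | 3, 3 => 1 / 40
  | 4, 4 => 1 / 200 | 4, 5 => - (1 / 300) | 5, 4 => - (1 / 300) | 5, 5 => 1 / 200
  | 6, 6 => 1 / (18 * 100)
  | _, _ => 0 end.
Definition Gi0 : 'M[R]_7 := \matrix_(i, j) Gif i j.

Lemma GGi : G0 *m Gi0 = 1%:M.
Proof.
apply/matrixP => i j; move: i j; apply: ord7_cases; apply: ord7_cases;
rewrite !mxE sum7 !mxE /Gf /Gif /=; by field.
Qed.

Lemma invG : invmx G0 = Gi0.
Proof.
have [uG _] := mulmx1_unit GGi.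
by rewrite -[RHS]mul1mx -(mulVmx uG) -mulmxA GGi mulmx1.
Qed.


Lemma e_ent (k m : 'I_7) : (@e R 7 k) 0 m = if eqn m k then 1 else 0.
Proof. by rewrite /e mxE eqxx /=; case: eqnP => [/val_inj ->|H]; [rewrite eqxx|case: eqP => // E; case: H; rewrite E]. Qed.

Lemma pairGi (H : 'I_7 -> 'I_7 -> R) :
  \sum_(k < 7) \sum_(l < 7) Gi0 k l * H k l =
  H o0 o0 + 1 / 5 * H o1 o1 + 1 / 40 * H o2 o2 - 1 / 120 * H o2 o3
  - 1 / 120 * H o3 o2 + 1 / 40 * H o3 o3 + 1 / 200 * H o4 o4
  - 1 / 300 * H o4 o5 - 1 / 300 * H o5 o4 + 1 / 200 * H o5 o5
  + 1 / (18 * 100) * H o6 o6.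
Proof. rewrite sum7 !sum7 !mxE /Gif /=; by field. Qed.

Lemma quadGi (A B : 'I_7 -> 'I_7 -> R) :
  \sum_(k < 7) \sum_(l < 7) \sum_(p < 7) \sum_(q < 7)
     Gi0 k p * Gi0 l q * A k l * B p q =
  \sum_(k < 7) \sum_(p < 7) Gi0 k p *
     (\sum_(l < 7) \sum_(q < 7) Gi0 l q * (A k l * B p q)).
Proof.
apply: eq_bigr => k _; rewrite exchange_big /=.
apply: eq_bigr => p _; rewrite mulr_sumr; apply: eq_bigr => l _.
rewrite mulr_sumr; apply: eq_bigr => q _; ring.
Qed.

Definition xi (x : 'rV[R]_7) (i : 'I_7) := x 0 i.

Lemma S1val x y :
  \sum_(k < 7) \sum_(l < 7) Gi0 k l *
     ipG G0 (@n7_bracket R x (@e R 7 k)) (@n7_bracket R y (@e R 7 l)) =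
  29 * (x 0 o0 * y 0 o0) + 90 * (x 0 o1 * y 0 o1) + 720 * (x 0 o2 * y 0 o2)
  + 240 * (x 0 o2 * y 0 o3 + x 0 o3 * y 0 o2) + 360 * (x 0 o3 * y 0 o3)
  + (18 * 100) * ((x 0 o4 + x 0 o5) * (y 0 o4 + y 0 o5)).
Proof.
rewrite pairGi !ipG_expl /ipx !br_expl !mxE /brf /= !e_ent /=; by field.
Qed.

Definition av (k l : nat) (x : 'rV[R]_7) : R :=
  let X2 := 45 * x 0 o2 + 15 * x 0 o3 in
  let X4 := 360 * x 0 o4 + 240 * x 0 o5 in
  let X5 := 240 * x 0 o4 + 360 * x 0 o5 in
  let X6 := (18 * 100) * x 0 o6 in
  match k, l with
  | 0, 1 => X2 | 1, 0 => - X2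
  | 0, 2 => X4 | 2, 0 => - X4
  | 0, 3 => X5 | 3, 0 => - X5
  | 0, 4 => X6 | 4, 0 => - X6
  | 0, 5 => X6 | 5, 0 => - X6
  | 1, 2 => X6 | 2, 1 => - X6
  | _, _ => 0 end.

Lemma Aval (k l : 'I_7) x :
  ipG G0 (@n7_bracket R (@e R 7 k) (@e R 7 l)) x = av k l x.
Proof.
move: k l; apply: ord7_cases; apply: ord7_cases;
rewrite ipG_expl /ipx br_expl !mxE /brf /= !e_ent /av /=; ring.
Qed.

Lemma S2val x y :
  \sum_(k < 7) \sum_(l < 7) \sum_(p < 7) \sum_(q < 7)
     Gi0 k p * Gi0 l q * ipG G0 (@n7_bracket R (@e R 7 k) (@e R 7 l)) x *
       ipG G0 (@n7_bracket R (@e R 7 p) (@e R 7 q)) y =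
  810 * (x 0 o2 * y 0 o2) + 270 * (x 0 o2 * y 0 o3 + x 0 o3 * y 0 o2)
  + 90 * (x 0 o3 * y 0 o3) + (648 * 10) * (x 0 o4 * y 0 o4)
  + (552 * 10) * (x 0 o4 * y 0 o5 + x 0 o5 * y 0 o4) + (648 * 10) * (x 0 o5 * y 0 o5)
  + (540 * 100) * (x 0 o6 * y 0 o6).
Proof.
rewrite (quadGi (fun k l => ipG G0 (@n7_bracket R (@e R 7 k) (@e R 7 l)) x)
                (fun p q => ipG G0 (@n7_bracket R (@e R 7 p) (@e R 7 q)) y)).
rewrite pairGi !pairGi !Aval /av /=; by field.
Qed.


Lemma ric_ok x y :
  ric_form (@n7_bracket R) G0 x y = ipG G0 ((-20) *: x + x *m D0) y.
Proof.
rewrite /ric_form; cbv zeta beta; rewrite invG S1val S2val ipG_expl /ipx.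
rewrite !mxE !sum7 !mxE /dg /=; by field.
Qed.

Lemma G0_sym : G0^T = G0.
Proof.
apply/matrixP => i j; rewrite !mxE; move: i j; apply: ord7_cases; apply: ord7_cases; by [].
Qed.

Lemma G0_pos (x : 'rV[R]_7) : x != 0 -> 0 < ipG G0 x x.
Proof.
move=> nz.
have /existsP [i hi] : [exists i, x 0 i != 0].
  apply: contraR nz => /existsPn H; apply/eqP/rowP => j; rewrite mxE.
  by move/negPn/eqP: (H j).
rewrite ipG_expl.
have -> : ipx x x = x 0 o0 ^+ 2 + 5 * x 0 o1 ^+ 2 + 15 * (x 0 o2 + x 0 o3) ^+ 2
   + 30 * x 0 o2 ^+ 2 + 30 * x 0 o3 ^+ 2 + 240 * (x 0 o4 + x 0 o5) ^+ 2
   + 120 * x 0 o4 ^+ 2 + 120 * x 0 o5 ^+ 2 + (18 * 100) * x 0 o6 ^+ 2 by rewrite /ipx; ring.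
have hp : 0 < x 0 i ^+ 2 by rewrite lt0r sqr_ge0 sqrf_eq0 hi.
have := sqr_ge0 (x 0 o0); have := sqr_ge0 (x 0 o1); have := sqr_ge0 (x 0 o2);
have := sqr_ge0 (x 0 o3); have := sqr_ge0 (x 0 o4); have := sqr_ge0 (x 0 o5);
have := sqr_ge0 (x 0 o6); have := sqr_ge0 (x 0 o2 + x 0 o3);
have := sqr_ge0 (x 0 o4 + x 0 o5).
move: i hi hp; apply: ord7_cases => _ hp; lra.
Qed.

End Work.

Theorem mainTheorem15 (R : realType) : Einstein_nilradical (@n7_bracket R).
Proof.
exists (G0 R); split; first by split; [exact: G0_sym | exact: G0_pos].
exists (-20), (D0 R); split; [exact: D0_der | exact: ric_ok].
Qed.
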